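(* Let $s\in\{1,2\}$, let $k,l\ge 0$ be integers, and let $\mathcal Q(k,l,1,s,1)$ be the set of lattice paths with steps $(1,1)$ (up), $(s,0)$ (flat) and $(1,-1)$ (down), starting at $(0,0)$, having exactly $k+1$ up steps, $k$ down steps and $l$ flat steps (so ending at $(2k+sl+1,1)$). Then (whenever the denominators are nonzero): (1) For each $i=1,\dots,k+1$, the number of such paths that start with an up step and have exactly $i$ up steps starting on or below the $x$-axis is $\frac{1}{k+1}\binom{2k+l}{2k}\binom{2k}{k}$. (2) For each $i=1,\dots,k$, the number of such paths that start with a down step and have exactly $i$ down steps starting on or below the $x$-axis is $\frac1k\binom{2k+l}{2k}\binom{2k}{k-1}$. (3) For each $i=1,\dots,l$, the number of such paths that start with a flat step and have exactly $i$ flat steps starting on or below the $x$-axis is $\frac1l\binom{2k+l}{k}\binom{k+l}{k+1}$. (4) For each $i=1,\dots,k+l+1$, the number of such paths that start with an up or flat step and have exactly $i$ up-or-flat steps starting on or below the $x$-axis is $\frac{1}{k+l+1}\binom{2k+l}{k}\binom{k+l+1}{k+1}$. (5) For each $i=1,\dots,k+l$, the number of such paths that start with a down or flat step and have exactly $i$ down-or-flat steps starting on or below the $x$-axis is $\frac{1}{k+l}\binom{2k+l}{k+1}\binom{k+l}{k}$. (6) For each $i=1,\dots,2k+1$, the number of such paths that start with an up or down step and have exactly $i$ up-or-down steps starting on or below the $x$-axis is $\frac{1}{2k+1}\binom{2k+l}{2k}\binom{2k+1}{k}$. (7) For each $i=1,\dots,2k+l+1$, the number of such paths with exactly $i$ vertices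 on or below the $x$-axis is $\frac{1}{2k+l+1}\binom{2k+l+1}{2k+1}\binom{2k+1}{k}$.
   Context: A step starts on or below the $x$-axis if its initial vertex has $y$-coordinate $\le 0$; a vertex is on or below the $x$-axis if its $y$-coordinate is $\le 0$ (the final vertex, at height $1$, is never counted). *)

(* Defs.v *)
From mathcomp Require Import all_boot all_order all_algebra.
Set Implicit Arguments. Unset Strict Implicit. Unset Printing Implicit Defensive.
Import Order.TTheory GRing.Theory Num.Theory.

Inductive step := U | F | D.

Local Open Scope ring_scope.

Definition step_vec (s : nat) (a : step) : int * int :=
  match a with
  | U => (1, 1)
  | F => (s%:Z, 0)
  | D => (1, -1)
  end.

Fixpoint vertices_from (s : nat) (v : int * int) (p : seq step) : seq (int * int) :=
  match p with
  | [::] => [:: v]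
  | a :: q => v :: vertices_from s (v.1 + (step_vec s a).1, v.2 + (step_vec s a).2) q
  end.

Definition vertices (s : nat) (p : seq step) := vertices_from s (0, 0) p.

Fixpoint all_words (n : nat) : seq (seq step) :=
  match n with
  | 0%N => [:: [::]]
  | n'.+1 => [seq a :: w | a <- [:: U; F; D], w <- all_words n']
  end.

Definition isU (a : step) : bool := if a is U then true else false.
Definition isF (a : step) : bool := if a is F then true else false.
Definition isD (a : step) : bool := if a is D then true else false.

(* Q(k,l,1,s,1): paths from (0,0) with k+1 up, k down, l flat steps.
   (A path is identified with its sequence of steps; the flat length s only
   affects x-coordinates.) *)
Definition Qpaths (k l : nat) : seq (seq step) :=
  [seq p <- all_words (2 * k + l + 1)
   | [&& count isU p == k.+1, count isD p == k & count isF p == l]].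

Definition starts_with (C : step -> bool) (p : seq step) : bool :=
  if p is a :: _ then C a else false.

Definition low_steps (s : nat) (C : step -> bool) (p : seq step) : nat :=
  count (fun av : step * (int * int) => C av.1 && (av.2.2 <= 0))
        (zip p (vertices s p)).

(* number of vertices with y-coordinate <= 0, the final vertex excluded *)
Definition low_vertices (s : nat) (p : seq step) : nat :=
  count (fun v : int * int => v.2 <= 0) (belast (0, 0) (behead (vertices s p))).

Definition nb_low (s k l : nat) (C : step -> bool) (i : nat) : nat :=
  count (fun p => starts_with C p && (low_steps s C p == i)) (Qpaths k l).

Definition nb_low_vertices (s k l i : nat) : nat :=
  count (fun p => low_vertices s p == i) (Qpaths k l).

(* Main.v *)
Require Import Defs.
From HB Require Import structures.
From mathcomp Require Import all_boot all_order all_algebra.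
From mathcomp Require Import zify ring lra.
Import Order.TTheory GRing.Theory Num.Theory.
Local Open Scope ring_scope.

Definition step_eqb (a b : step) : bool :=
  match a, b with U, U | F, F | D, D => true | _, _ => false end.
Lemma step_eqP : Equality.axiom step_eqb.
Proof. by case; case; constructor. Qed.
HB.instance Definition _ := hasDecEq.Build step step_eqP.

Definition dv (a : step) : int := match a with U => 1 | F => 0 | D => -1 end.
Definition ht (p : seq step) (t : nat) : int := \sum_(a <- take t p) dv a.
Definition lowc (C : step -> bool) (p : seq step) : nat :=
  count (fun t => C (nth U p t) && (ht p t <= 0)) (iota 0 (size p)).

Lemma ht0 p : ht p 0 = 0.
Proof. by rewrite /ht take0 big_nil. Qed.

Lemma htS a q t : ht (a :: q) t.+1 = dv a + ht q t.
Proof. by rewrite /ht /= big_cons. Qed.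

Lemma iota1 n : iota 1 n = map succn (iota 0 n).
Proof. by rewrite -[1%N]/(1 + 0)%N iotaDl. Qed.

Lemma low_from s C p (v : int * int) :
  count (fun av : step * (int * int) => C av.1 && (av.2.2 <= 0))
        (zip p (vertices_from s v p)) =
  count (fun t => C (nth U p t) && (v.2 + ht p t <= 0)) (iota 0 (size p)).
Proof.
elim: p v => [|a q IH] v //=.
rewrite IH iota1 count_map ht0 addr0; congr (_ + _).
apply: eq_count => t /=; rewrite htS addrA; congr (_ && (_ <= 0)).
by case: a.
Qed.

Lemma low_steps_eq s C p : low_steps s C p = lowc C p.
Proof. by rewrite /low_steps /vertices low_from /lowc; apply: eq_count => t /=; rewrite add0r. Qed.

Lemma belast_from s v p :
  belast v (behead (vertices_from s v p)) =
  map (fun av : step * (int * int) => av.2) (zip p (vertices_from s v p)).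
Proof.
elim: p v => [|a q IH] v //=.
case: q IH => [|b q] IH //=.
by congr (_ :: _); exact: IH.
Qed.

Lemma low_vertices_eq s p : low_vertices s p = lowc (fun _ => true) p.
Proof.
rewrite /low_vertices /vertices belast_from count_map -(low_steps_eq s) /low_steps /vertices.
by apply: eq_count.
Qed.
Lemma L1 (a b : int) (t j N : nat) : (j <= t)%N -> (t < N)%N ->
  (a - b <= 0) = (a * N%:Z - t%:Z <= b * N%:Z - j%:Z).
Proof.
move=> h1 h2; apply/idP/idP => h.
- have : (a - b) * N%:Z <= 0 by nia. nia.
- apply: contraTT h; rewrite -!ltNge => h.
  have : (a - b - 1) * N%:Z >= 0 by nia. nia.
Qed.
Lemma L2 (a b : int) (t j N : nat) : (t < j)%N -> (j < N)%N ->
  (1 - b + a <= 0) = (a * N%:Z - t%:Z <= b * N%:Z - j%:Z).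
Proof.
move=> h1 h2; apply/idP/idP => h.
- have : (a - b + 1) * N%:Z <= 0 by nia. nia.
- apply: contraTT h; rewrite -!ltNge => h.
  have : (a - b) * N%:Z >= 0 by nia. nia.
Qed.
Lemma Linj (a b : int) (t j N : nat) : (t < N)%N -> (j < N)%N ->
  a * N%:Z - t%:Z = b * N%:Z - j%:Z -> t = j.
Proof.
move=> h1 h2 h.
have [hab|[hab|hab]] : (a - b <= -1) \/ (a - b >= 1) \/ a = b by lia.
- have : (a - b + 1) * N%:Z <= 0 by nia. nia.
- have : (a - b - 1) * N%:Z >= 0 by nia. nia.
- subst; lia.
Qed.

Definition key (p : seq step) (t : nat) : int := ht p t * (size p).+1%:Z - t%:Z.

Lemma ht_add p a b : ht p (a + b) = ht p a + ht (drop a p) b.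
Proof. by rewrite /ht takeD big_cat. Qed.

Lemma count_rot_eq (T : Type) (a : pred T) s j : count a (rot j s) = count a s.
Proof. by rewrite /rot count_cat addnC -count_cat cat_take_drop. Qed.

Lemma rot_nth_lo p j r : (j <= size p)%N -> (r < size p - j)%N ->
  nth U (rot j p) r = nth U p (j + r).
Proof. by move=> hj hr; rewrite /rot nth_cat size_drop hr nth_drop. Qed.

Lemma rot_nth_hi p j r : (r < j)%N -> (j <= size p)%N ->
  nth U (rot j p) (size p - j + r) = nth U p r.
Proof.
move=> hr hj; rewrite /rot nth_cat size_drop.
rewrite ifF; last by apply/negbTE; rewrite -leqNgt leq_addr.
by rewrite addKn nth_take.
Qed.

Lemma rot_ht_lo p j r : (j <= size p)%N -> (r <= size p - j)%N ->
  ht (rot j p) r = ht p (j + r) - ht p j.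
Proof.
move=> hj hr; rewrite ht_add /ht /rot takel_cat ?size_drop //.
by rewrite addrC addKr.
Qed.

Lemma rot_ht_hi p j r : (r <= j)%N -> (j <= size p)%N ->
  ht (rot j p) (size p - j + r) = \sum_(a <- p) dv a - ht p j + ht p r.
Proof.
move=> hr hj; rewrite /ht /rot takeD take_size_cat ?size_drop //.
rewrite drop_size_cat ?size_drop // take_takel // big_cat /=.
have -> : \sum_(a <- p) dv a = \sum_(a <- take j p) dv a + \sum_(a <- drop j p) dv a.
  by rewrite -big_cat cat_take_drop.
by ring.
Qed.

Lemma lowc_rot C p j : \sum_(a <- p) dv a = 1 -> (j < size p)%N ->
  lowc C (rot j p) =
  count (fun t => C (nth U p t) && (key p t <= key p j)) (iota 0 (size p)).
Proof.
move=> htot hj; rewrite /lowc size_rot.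
set n := size p.
have hjn : (j <= n)%N by apply: ltnW.
have E1 : iota 0 n = iota 0 (n - j) ++ iota (n - j) j.
  by rewrite -iotaD subnK.
have E2 : rot j (iota 0 n) = iota j (n - j) ++ iota 0 j.
  by rewrite /rot drop_iota take_iota add0n (minn_idPl hjn).
symmetry; rewrite -(count_rot_eq _ _ _ j) E2 E1 !count_cat; congr (_ + _).
- rewrite -[j in iota j _]addn0 iotaDl count_map; apply: eq_in_count => r.
  rewrite mem_iota add0n => /andP [_ hr] /=.
  rewrite rot_nth_lo // rot_ht_lo ?(ltnW hr) //; congr (_ && _).
  rewrite /key; symmetry; apply: L1; rewrite ?leq_addr //.
  rewrite -/n; lia.
- rewrite (_ : iota (n - j) j = map (addn (n - j)) (iota 0 j)); last by rewrite -iotaDl addn0.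
  rewrite count_map; apply: eq_in_count => r.
  rewrite mem_iota add0n => /andP [_ hr] /=.
  rewrite rot_nth_hi // rot_ht_hi ?(ltnW hr) // htot; congr (_ && _).
  by rewrite /key; symmetry; apply: L2 => //; apply: (@leq_trans n).
Qed.

Lemma count_split (T : Type) (a b : pred T) s :
  count a s = (count (fun z => a z && b z) s + count (fun z => a z && ~~ b z) s)%N.
Proof.
elim: s => [|x s IH] //=; rewrite IH.
by case: (a x); case: (b x) => /=; lia.
Qed.

Lemma rank_perm (K : seq int) : uniq K ->
  perm_eq [seq count (fun y => y <= x) K | x <- K] (iota 1 (size K)).
Proof.
move=> uK.
set g := fun x => count (fun y => y <= x) K.
have gmono : forall x y, y \in K -> x < y -> (g x < g y)%N.
  move=> x y yK lt; rewrite /g (count_split _ (fun z => z <= y) (fun z => z <= x)).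
  have -> : count (fun z => (z <= y) && (z <= x)) K = count (fun z => z <= x) K.
    apply: eq_count => z /=; case hzx: (z <= x); rewrite ?andbF ?andbT //.
    exact: le_trans hzx (ltW lt).
  rewrite -[X in (X < _)%N]addn0 ltn_add2l -has_count; apply/hasP; exists y => //.
  by rewrite lexx -ltNge lt.
have ginj : {in K &, injective g}.
  move=> x y xK yK e; case: (ltgtP x y) => // h.
  - by have := gmono x y yK h; rewrite e ltnn.
  - by have := gmono y x xK h; rewrite e ltnn.
have uM : uniq (map g K) by rewrite map_inj_in_uniq.
apply: uniq_perm => //; first exact: iota_uniq.
have SUB : {subset map g K <= iota 1 (size K)}.
  move=> z /mapP [x xK ->]; rewrite mem_iota.
  apply/andP; split; last by rewrite add1n ltnS count_size.
  by rewrite -has_count; apply/hasP; exists x => //.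
have SZ : (size (iota 1 (size K)) <= size (map g K))%N by rewrite size_iota size_map.
by have [_ E] := @uniq_min_size _ (map g K) (iota 1 (size K)) uM SUB SZ.
Qed.

Lemma one_rot C p m i : \sum_(a <- p) dv a = 1 -> count C p = m ->
  (1 <= i <= m)%N ->
  count (fun j => C (nth U p j) && (lowc C (rot j p) == i)) (iota 0 (size p)) = 1%N.
Proof.
move=> htot hC hi.
set n := size p.
set Pos := [seq t <- iota 0 n | C (nth U p t)].
set K := map (key p) Pos.
have Posn : forall x, x \in Pos -> (x < n)%N.
  by move=> x; rewrite mem_filter mem_iota add0n => /andP [_ /andP [_ ->]].
have keyinj : {in Pos &, injective (key p)}.
  move=> x y xP yP; rewrite /key => e.
  by apply: (Linj _ _ _ _ (size p).+1 _ _ e); rewrite ltnS ltnW // Posn.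
have uK : uniq K by rewrite map_inj_in_uniq // filter_uniq // iota_uniq.
have sK : size K = m.
  rewrite size_map size_filter -hC -(count_map (nth U p) C).
  by rewrite map_nth_iota0 // take_size.
have low : forall j, (j < n)%N -> lowc C (rot j p) = count (fun y => y <= key p j) K.
  move=> j hj; rewrite lowc_rot // /K count_map count_filter.
  by apply: eq_count => t /=; rewrite andbC.
have -> : count (fun j => C (nth U p j) && (lowc C (rot j p) == i)) (iota 0 n)
        = count (fun j => count (fun y => y <= key p j) K == i) Pos.
  rewrite /Pos count_filter; apply: eq_in_count => j.
  by rewrite mem_iota add0n => /andP [_ hj] /=; rewrite low // andbC.
have -> : count (fun j => count (fun y => y <= key p j) K == i) Pos
        = count (pred1 i) [seq count (fun y => y <= x) K | x <- K].
  by rewrite count_map /K count_map.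
rewrite (permP (rank_perm _ uK)) count_uniq_mem ?iota_uniq //.
by rewrite mem_iota sK add1n ltnS hi.
Qed.

Local Close Scope ring_scope.

Lemma count_sumE (T : Type) (a : pred T) s : count a s = \sum_(x <- s) (a x : nat).
Proof. by elim: s => [|x s IH]; rewrite ?big_nil ?big_cons //= IH. Qed.

Lemma starts_nth C q : (0 < size q) -> starts_with C q = C (nth U q 0).
Proof. by case: q. Qed.

Lemma dcount C (Q : seq (seq step)) n m i :
  uniq Q -> 0 < n ->
  (forall p, p \in Q -> [/\ size p = n, (\sum_(a <- p) dv a = 1)%R & count C p = m]) ->
  (forall p j, p \in Q -> rot j p \in Q) ->
  1 <= i <= m ->
  count (fun q => starts_with C q && (lowc C q == i)) Q * n = size Q.
Proof.
move=> uQ n0 hQ rQ hi.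
set f := fun q => starts_with C q && (lowc C q == i).
have E1 : size Q = \sum_(p <- Q) count (fun j => C (nth U p j) && (lowc C (rot j p) == i)) (iota 0 n).
  rewrite -sum1_size; apply: eq_big_seq => p pQ.
  have [sp ht1 cp] := hQ p pQ.
  by rewrite -sp (one_rot _ _ _ _ ht1 cp hi).
rewrite E1.
under eq_bigr do rewrite count_sumE.
rewrite exchange_big /=.
have E2 : forall j, j \in iota 0 n ->
   \sum_(p <- Q) (C (nth U p j) && (lowc C (rot j p) == i) : nat) = count f Q.
  move=> j; rewrite mem_iota add0n => /andP [_ hj].
  rewrite -count_sumE.
  have -> : count (fun p => C (nth U p j) && (lowc C (rot j p) == i)) Q
          = count f (map (rot j) Q).
    rewrite count_map; apply: eq_in_count => p pQ /=.
    have [sp _ _] := hQ p pQ.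
    rewrite /f starts_nth ?size_rot ?sp //.
    by rewrite /rot nth_cat size_drop sp subn_gt0 hj nth_drop addn0.
  apply: (permP _).
  have uM : uniq (map (rot j) Q) by rewrite (map_inj_uniq (@rot_inj j _)).
  apply: uniq_perm => //.
  have SUB : {subset map (rot j) Q <= Q} by move=> z /mapP [p pQ ->]; exact: rQ.
  have SZ : size Q <= size (map (rot j) Q) by rewrite size_map.
  by have [_ E] := uniq_min_size uM SUB SZ.
rewrite (eq_big_seq _ E2) big_const_seq count_predT size_iota iter_addn_0.
by [].
Qed.

Local Open Scope ring_scope.

Local Close Scope ring_scope.

Lemma all_words_uniq n : uniq (all_words n).
Proof.
elim: n => [|n IH] //.
change (uniq [seq a :: w | a <- [:: U; F; D], w <- all_words n]).
apply: allpairs_uniq => //.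
by move=> [a w] [b v] _ _ /= [-> ->].
Qed.

Lemma mem_all_words n p : (p \in all_words n) = (size p == n).
Proof.
elim: n p => [|n IH] [|a q] //.
- change ([::] \in [seq a :: w | a <- [:: U; F; D], w <- all_words n] = false).
  apply/negbTE/allpairsP; case => [[b w]] [_ _ /= //].
- change ((a :: q \in [seq a :: w | a <- [:: U; F; D], w <- all_words n]) = (size (a :: q) == n.+1)).
  rewrite -[size (a :: q)]/((size q).+1) eqSS -IH; apply/allpairsP/idP.
  + by case => [[b w]] [/= _ hw [_ ->]].
  + move=> hq; exists (a, q); split => //=.
    by case: a.
Qed.

Lemma count_size3 p : count isU p + count isF p + count isD p = size p.
Proof. by elim: p => [|a p IH] //=; case: a; rewrite /= -IH; lia. Qed.

Lemma count_gen (C : step -> bool) p :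
  count C p = C U * count isU p + C F * count isF p + C D * count isD p.
Proof.
elim: p => [|a p IH] /=; first by rewrite !muln0.
rewrite IH; case: a; case: (C U); case: (C F); case: (C D) => /=; lia.
Qed.

Lemma sum_dv p : (\sum_(a <- p) dv a)%R = ((count isU p)%:Z - (count isD p)%:Z)%R.
Proof.
elim: p => [|a p IH]; first by rewrite big_nil.
rewrite big_cons IH; case: a => /=; rewrite ?add0n ?add1n; lia.
Qed.

Definition cnt n b c :=
  count (fun p => (count isF p == b) && (count isD p == c)) (all_words n).

Lemma cntS n b c : cnt n.+1 b c =
  cnt n b c + (if b is b'.+1 then cnt n b' c else 0) +
  (if c is c'.+1 then cnt n b c' else 0).
Proof.
rewrite /cnt /= !count_cat !count_map /= addn0 addnA; congr (_ + _ + _).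
- case: b => [|b].
  + by rewrite (@eq_count _ _ pred0) ?count_pred0 // => p /=; rewrite add1n.
  + by apply: eq_count => p /=; rewrite add1n eqSS.
- case: c => [|c].
  + by rewrite (@eq_count _ _ pred0) ?count_pred0 // => p /=; rewrite add1n andbF.
  + by apply: eq_count => p /=; rewrite add1n eqSS.
Qed.

Lemma cntE n b c : cnt n b c = 'C(n, b) * 'C(n - b, c).
Proof.
elim: n b c => [|n IH] b c.
  by rewrite /cnt /=; case: b => [|b]; case: c => [|c].
rewrite cntS; case: b => [|b]; case: c => [|c]; rewrite ?IH.
- by rewrite !bin0.
- by rewrite !bin0 !subn0 binS !mul1n addn0.
- by rewrite !bin0 !muln1 binS addn0 addnC.
- rewrite subSS binS mulnDl.
  case: (ltnP b n) => hb.
  + rewrite -(subnSK hb) binS; lia.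
  + rewrite (bin_small (n := n) (m := b.+1)) ?ltnS //; lia.
Qed.

Lemma size_Q k l : size (Qpaths k l) = 'C(2 * k + l + 1, l) * 'C(2 * k + 1, k).
Proof.
rewrite size_filter.
have -> : 2 * k + 1 = (2 * k + l + 1) - l by lia.
rewrite -cntE /cnt; apply: eq_in_count => p.
rewrite mem_all_words => /eqP hp.
have h3 := count_size3 p.
apply/idP/idP.
- by case/and3P => _ /eqP -> /eqP ->; rewrite !eqxx.
- case/andP => /eqP hF /eqP hD; apply/and3P; split; apply/eqP => //; rewrite hp hF hD in h3; lia.
Qed.

Lemma Q_props k l (C : step -> bool) p : p \in Qpaths k l ->
  [/\ size p = 2 * k + l + 1, (\sum_(a <- p) dv a = 1)%R &
      count C p = C U * k.+1 + C F * l + C D * k].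
Proof.
rewrite mem_filter mem_all_words => /andP [/and3P [/eqP hU /eqP hD /eqP hF] /eqP hs].
split => //; first by rewrite sum_dv hU hD; lia.
by rewrite count_gen hU hD hF.
Qed.

Lemma Q_rot k l p j : p \in Qpaths k l -> rot j p \in Qpaths k l.
Proof.
rewrite !mem_filter !mem_all_words size_rot.
by rewrite !(count_rot_eq _ _ _ j).
Qed.

Lemma main_nat s k l (C : step -> bool) i : 1 <= i <= C U * k.+1 + C F * l + C D * k ->
  nb_low s k l C i * (2 * k + l + 1) = 'C(2 * k + l + 1, l) * 'C(2 * k + 1, k).
Proof.
move=> hi; rewrite -size_Q /nb_low.
rewrite -(@dcount C (Qpaths k l) (2 * k + l + 1) (C U * k.+1 + C F * l + C D * k) i) //.
- congr (_ * _); apply: eq_count => p; by rewrite low_steps_eq.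
- exact: filter_uniq (all_words_uniq _).
- by rewrite addn1.
- by move=> p pQ; exact: Q_props.
- by move=> p j; exact: Q_rot.
Qed.

Lemma main_nat_v s k l i : 1 <= i <= 2 * k + l + 1 ->
  nb_low_vertices s k l i * (2 * k + l + 1) = 'C(2 * k + l + 1, l) * 'C(2 * k + 1, k).
Proof.
move=> hi.
have -> : nb_low_vertices s k l i = nb_low s k l (fun _ => true) i.
  rewrite /nb_low_vertices /nb_low; apply: eq_in_count => p pQ.
  have [sp _ _] := @Q_props k l (fun _ => true) p pQ.
  rewrite low_vertices_eq -(low_steps_eq s) starts_nth // sp; lia.
apply: main_nat; rewrite /=; lia.
Qed.

Local Open Scope ring_scope.
Lemma factR_neq0 n : (n`!)%:R != 0 :> rat.
Proof. by rewrite pnatr_eq0 -lt0n fact_gt0. Qed.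
Lemma succR_neq0 n : (n.+1)%:R != 0 :> rat.
Proof. by rewrite pnatr_eq0. Qed.

Lemma binR n m : (m <= n)%N ->
  ('C(n, m))%:R = (n`!)%:R / ((m`!)%:R * ((n - m)`!)%:R) :> rat.
Proof.
move=> h; have := bin_fact h; move/(congr1 (fun x => x%:R : rat)).
rewrite !natrM => <-.
have := factR_neq0 m; have := factR_neq0 (n - m) => h1 h2.
by field; rewrite h1 h2.
Qed.

Definition MM k l : rat := ((2 * k + l)`!)%:R / ((k.+1)`!%:R * (k`!)%:R * (l`!)%:R).

Lemma S_eq k l : ('C(2 * k + l + 1, l) * 'C(2 * k + 1, k))%:R / (2 * k + l + 1)%:R = MM k l.
Proof.
rewrite natrM binR ?binR; try lia.
have -> : (2 * k + l + 1 - l = (2 * k).+1)%N by lia.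
have -> : (2 * k + 1 - k = k.+1)%N by lia.
have -> : (2 * k + l + 1 = (2 * k + l).+1)%N by lia.
have -> : (2 * k + 1 = (2 * k).+1)%N by lia.
rewrite /MM !factS !natrM.
have := factR_neq0 k; have := factR_neq0 l; have := factR_neq0 (2 * k);
have := factR_neq0 (2 * k + l); have := succR_neq0 (2 * k + l);
have := succR_neq0 (2 * k); have := succR_neq0 k => h1 h2 h3 h4 h5 h6 h7.
have hk : (0 : rat) <= k%:R := ler0n _ k.
have hl : (0 : rat) <= l%:R := ler0n _ l.
field; rewrite ?h5 ?h6 ?h7 ?h4 //=.
clear h1 h2 h3 h4 h5 h6 h7.
by repeat (apply/andP; split); apply/eqP => E; lra.
Qed.

Lemma nn n : (0 : rat) <= n%:R.
Proof. exact: ler0n. Qed.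

Lemma pos1 n : (1 + n%:R : rat) != 0.
Proof. by rewrite addrC natr1 pnatr_eq0. Qed.

Ltac ffin := field; repeat (apply/andP; split);
  first [ exact: factR_neq0 | exact: pos1 | done | apply/eqP => E; lra ].

Lemma T1 k l : (k.+1%:R)^-1 * ('C(2 * k + l, 2 * k))%:R * ('C(2 * k, k))%:R = MM k l.
Proof.
rewrite !binR; try lia.
have -> : (2 * k + l - 2 * k = l)%N by lia.
have -> : (2 * k - k = k)%N by lia.
rewrite /MM (factS k) !natrM.
have := nn k; have := nn l => hl hk; ffin.
Qed.

Lemma T2 k l : (0 < k)%N ->
  (k%:R)^-1 * ('C(2 * k + l, 2 * k))%:R * ('C(2 * k, k.-1))%:R = MM k l.
Proof.
case: k => [|k] // _; rewrite [k.+1.-1]/=.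
rewrite !binR; try lia.
have -> : (2 * k.+1 + l - 2 * k.+1 = l)%N by lia.
have -> : (2 * k.+1 - k = k.+2)%N by lia.
rewrite /MM (factS k.+1) (factS k) !natrM.
have := nn k; have := nn l => hl hk; ffin.
Qed.

Lemma T3 k l : (0 < l)%N ->
  (l%:R)^-1 * ('C(2 * k + l, k))%:R * ('C(k + l, k.+1))%:R = MM k l.
Proof.
case: l => [|l] // _.
rewrite !binR; try lia.
have -> : (2 * k + l.+1 - k = k + l.+1)%N by lia.
have -> : (k + l.+1 - k.+1 = l)%N by lia.
rewrite /MM (factS k) (factS l) !natrM.
have := nn k; have := nn l => hl hk; ffin.
Qed.

Lemma T4 k l :
  ((k + l + 1)%:R)^-1 * ('C(2 * k + l, k))%:R * ('C(k + l + 1, k.+1))%:R = MM k l.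
Proof.
rewrite !binR; try lia.
have -> : (2 * k + l - k = k + l)%N by lia.
have -> : (k + l + 1 - k.+1 = l)%N by lia.
have -> : (k + l + 1 = (k + l).+1)%N by lia.
rewrite /MM (factS k) (factS (k + l)) !natrM.
have := nn k; have := nn l => hl hk; ffin.
Qed.

Lemma T5 k l : (0 < k + l)%N ->
  ((k + l)%:R)^-1 * ('C(2 * k + l, k.+1))%:R * ('C(k + l, k))%:R = MM k l.
Proof.
move=> h.
rewrite !binR; try lia.
have -> : (2 * k + l - k.+1 = (k + l).-1)%N by lia.
have -> : (k + l - k = l)%N by lia.
have e : (k + l = (k + l).-1.+1)%N by lia.
rewrite [in (k + l)`!]e [in (k + l)%:R]e.
rewrite /MM (factS k) (factS (k + l).-1) !natrM.
have := nn k; have := nn l; have := nn (k + l).-1 => hm hl hk; ffin.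
Qed.

Lemma T6 k l :
  ((2 * k + 1)%:R)^-1 * ('C(2 * k + l, 2 * k))%:R * ('C(2 * k + 1, k))%:R = MM k l.
Proof.
rewrite !binR; try lia.
have -> : (2 * k + l - 2 * k = l)%N by lia.
have -> : (2 * k + 1 - k = k.+1)%N by lia.
have -> : (2 * k + 1 = (2 * k).+1)%N by lia.
rewrite /MM (factS k) (factS (2 * k)) !natrM.
have := nn k; have := nn l => hl hk; ffin.
Qed.

Lemma T7 k l :
  ((2 * k + l + 1)%:R)^-1 * ('C(2 * k + l + 1, 2 * k + 1))%:R * ('C(2 * k + 1, k))%:R
  = MM k l.
Proof.
rewrite !binR; try lia.
have -> : (2 * k + l + 1 - (2 * k + 1) = l)%N by lia.
have -> : (2 * k + 1 - k = k.+1)%N by lia.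
have -> : (2 * k + l + 1 = (2 * k + l).+1)%N by lia.
have -> : (2 * k + 1 = (2 * k).+1)%N by lia.
rewrite /MM (factS k) (factS (2 * k)) (factS (2 * k + l)) !natrM.
have := nn k; have := nn l => hl hk; ffin.
Qed.

Theorem theorem9 (s k l : nat) (hs : (s = 1 \/ s = 2)%N) :
  (forall i : nat, (1 <= i <= k.+1)%N ->
     (nb_low s k l isU i)%:R =
       (k.+1%:R)^-1 * ('C(2 * k + l, 2 * k))%:R * ('C(2 * k, k))%:R :> rat) /\
  (forall i : nat, (1 <= i <= k)%N ->
     (nb_low s k l isD i)%:R =
       (k%:R)^-1 * ('C(2 * k + l, 2 * k))%:R * ('C(2 * k, k.-1))%:R :> rat) /\
  (forall i : nat, (1 <= i <= l)%N ->
     (nb_low s k l isF i)%:R =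
       (l%:R)^-1 * ('C(2 * k + l, k))%:R * ('C(k + l, k.+1))%:R :> rat) /\
  (forall i : nat, (1 <= i <= k + l + 1)%N ->
     (nb_low s k l (fun a => isU a || isF a) i)%:R =
       ((k + l + 1)%:R)^-1 * ('C(2 * k + l, k))%:R * ('C(k + l + 1, k.+1))%:R :> rat) /\
  (forall i : nat, (1 <= i <= k + l)%N ->
     (nb_low s k l (fun a => isD a || isF a) i)%:R =
       ((k + l)%:R)^-1 * ('C(2 * k + l, k.+1))%:R * ('C(k + l, k))%:R :> rat) /\
  (forall i : nat, (1 <= i <= 2 * k + 1)%N ->
     (nb_low s k l (fun a => isU a || isD a) i)%:R =
       ((2 * k + 1)%:R)^-1 * ('C(2 * k + l, 2 * k))%:R * ('C(2 * k + 1, k))%:R :> rat) /\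
  (forall i : nat, (1 <= i <= 2 * k + l + 1)%N ->
     (nb_low_vertices s k l i)%:R =
       ((2 * k + l + 1)%:R)^-1 * ('C(2 * k + l + 1, 2 * k + 1))%:R
         * ('C(2 * k + 1, k))%:R :> rat).
Proof.
have key : forall (nb : nat) (tgt : rat),
    (nb * (2 * k + l + 1))%N = ('C(2 * k + l + 1, l) * 'C(2 * k + 1, k))%N ->
    tgt = MM k l -> nb%:R = tgt.
  move=> nb tgt e ->; rewrite -S_eq -e natrM mulfK //.
  by rewrite pnatr_eq0 addn1.
split; [|split; [|split; [|split; [|split; [|split]]]]] => i hi.
- by apply: key (T1 k l); apply: main_nat; rewrite /=; lia.
- have hk : (0 < k)%N by lia.
  by apply: key (T2 k l hk); apply: main_nat; rewrite /=; lia.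
- have hl : (0 < l)%N by lia.
  by apply: key (T3 k l hl); apply: main_nat; rewrite /=; lia.
- by apply: key (T4 k l); apply: main_nat; rewrite /=; lia.
- have hkl : (0 < k + l)%N by lia.
  by apply: key (T5 k l hkl); apply: main_nat; rewrite /=; lia.
- by apply: key (T6 k l); apply: main_nat; rewrite /=; lia.
- by apply: key (T7 k l); apply: main_nat_v.
Qed.
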